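(* Let $\mathfrak{g}_{(1,0,0,1)}$ be the real Lie algebra with basis $e_1,\dots,e_6$ and nonzero brackets $[e_1,e_5]=e_2$, $[e_2,e_5]=-e_1$, $[e_3,e_6]=e_4$, $[e_4,e_6]=-e_3$. Every derivation $D$ of $\mathfrak{g}_{(1,0,0,1)}$ has the form $De_1=d_{11}e_1-d_{12}e_2$, $De_2=d_{12}e_1+d_{11}e_2$, $De_3=d_{33}e_3-d_{34}e_4$, $De_4=d_{34}e_3+d_{33}e_4$, $De_5=d_{15}e_1+d_{25}e_2$, $De_6=d_{36}e_3+d_{46}e_4$ with $d_{ij}\in\mathbb{R}$. Moreover, for $\eta>0$ and $\omega_\eta=e^{12}+e^{34}+\eta e^{56}$, any derivation $D$ for which there is $\lambda\in\mathfrak{g}_{(1,0,0,1)}^*$ with $\omega_{\eta,D,D}=-d\lambda$ is an inner derivation of $\mathfrak{g}_{(1,0,0,1)}$.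
   Context: $e^{ij}=e^i\wedge e^j$ in the dual basis. For a 2-form $\varphi$ and endomorphism $D$, $\varphi_D(x,y)=\varphi(Dx,y)+\varphi(x,Dy)$, and $\omega_{\eta,D,D}=((\omega_\eta)_D)_D$. $d\lambda(x,y)=-\lambda([x,y])$. An inner derivation is one of the form $\mathrm{ad}_x$. *)

(* Defs.v *)
From mathcomp Require Import all_boot all_order all_algebra.
From mathcomp Require Import reals.
Set Implicit Arguments. Unset Strict Implicit. Unset Printing Implicit Defensive.
Import Order.TTheory GRing.Theory Num.Theory.
Local Open Scope ring_scope.

(* The underlying vector space R^6 is 'rV[R]_6; basis vector e_(k+1) is
   (ebas k) for k : 'I_6 (0-based indices: e1 = ebas 0, ..., e6 = ebas 5). *)
Definition ebas (R : realType) (k : 'I_6) : 'rV[R]_6 := delta_mx 0 k.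

Definition sconst (R : realType) (i j : 'I_6) : 'rV[R]_6 :=
  match nat_of_ord i, nat_of_ord j with
  | 0, 4 => ebas R (inord 1)
  | 4, 0 => - ebas R (inord 1)
  | 1, 4 => - ebas R (inord 0)
  | 4, 1 => ebas R (inord 0)
  | 2, 5 => ebas R (inord 3)
  | 5, 2 => - ebas R (inord 3)
  | 3, 5 => - ebas R (inord 2)
  | 5, 3 => ebas R (inord 2)
  | _, _ => 0
  end.

Definition lbr (R : realType) (x y : 'rV[R]_6) : 'rV[R]_6 :=
  \sum_(i < 6) \sum_(j < 6) (x 0 i * y 0 j) *: sconst R i j.

(* Endomorphisms are matrices acting on row vectors: D x := x *m D. *)
Definition is_derivation (R : realType) (D : 'M[R]_6) : Prop :=
  forall x y : 'rV[R]_6, lbr x y *m D = lbr (x *m D) y + lbr x (y *m D).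

Definition is_inner (R : realType) (D : 'M[R]_6) : Prop :=
  exists z : 'rV[R]_6, forall y : 'rV[R]_6, y *m D = lbr z y.

Definition form2 (R : realType) := 'rV[R]_6 -> 'rV[R]_6 -> R.

Definition ewedge (R : realType) (i j : 'I_6) : form2 R :=
  fun x y => x 0 i * y 0 j - x 0 j * y 0 i.

Definition omega_eta (R : realType) (eta : R) : form2 R :=
  fun x y => ewedge (inord 0) (inord 1) x y + ewedge (inord 2) (inord 3) x y
             + eta * ewedge (inord 4) (inord 5) x y.

Definition form_act (R : realType) (phi : form2 R) (D : 'M[R]_6) : form2 R :=
  fun x y => phi (x *m D) y + phi x (y *m D).

Definition lfun (R : realType) (l : 'cV[R]_6) (x : 'rV[R]_6) : R := (x *m l) 0 0.

Definition dlam (R : realType) (l : 'cV[R]_6) : form2 R :=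
  fun x y => - lfun l (lbr x y).

(* Main.v *)
Require Import Defs.
From mathcomp Require Import all_boot all_order all_algebra.
From mathcomp Require Import reals ring lra.
Import Order.TTheory GRing.Theory Num.Theory.
Local Open Scope ring_scope.


Lemma sum6 {R : realType} (F : 'I_6 -> R) : \sum_(i < 6) F i =
  F (inord 0) + F (inord 1) + F (inord 2) + F (inord 3) + F (inord 4) + F (inord 5).
Proof.
rewrite !big_ord_recl big_ord0 addr0 !addrA.
by repeat congr (_ + _); congr F; apply/val_inj; rewrite /= inordK.
Qed.

Lemma ebasE {R : realType} a c : (a < 6)%N -> (c < 6)%N ->
  ebas R (inord a) 0 (inord c) = (a == c)%:R.
Proof.
move=> ha hc; rewrite /ebas mxE /=.
by rewrite -val_eqE /= !inordK // eq_sym.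
Qed.

Lemma inord_eq a c : (a < 6)%N -> (c < 6)%N ->
  ((inord a : 'I_6) == inord c) = (a == c).
Proof. by move=> ha hc; rewrite -val_eqE /= !inordK. Qed.

Lemma ebasD {R : realType} a (D : 'M[R]_6) j : (ebas R a *m D) 0 j = D a j.
Proof. by rewrite /ebas -rowE mxE. Qed.

Notation x_ x k := (x 0 (@inord 5 k)).

Lemma vec6 {R : realType} (u v : 'rV[R]_6) :
  u 0 (inord 0) = v 0 (inord 0) -> u 0 (inord 1) = v 0 (inord 1) ->
  u 0 (inord 2) = v 0 (inord 2) -> u 0 (inord 3) = v 0 (inord 3) ->
  u 0 (inord 4) = v 0 (inord 4) -> u 0 (inord 5) = v 0 (inord 5) -> u = v.
Proof.
move=> h0 h1 h2 h3 h4 h5; apply/rowP => k.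
have E n (hn : (n < 6)%N) : Ordinal hn = inord n by apply/val_inj; rewrite /= inordK.
by case: k => [[|[|[|[|[|[|k]]]]]] hk]; rewrite ?E.
Qed.

Ltac lbrtac := rewrite /lbr summxE sum6 !summxE !sum6 /sconst !inordK //= !mxE; rewrite !eqxx !inord_eq //=; ring.

Lemma lbr0 {R : realType} (x y : 'rV[R]_6) : lbr x y 0 (inord 0) = x_ x 4 * x_ y 1 - x_ x 1 * x_ y 4.
Proof. lbrtac. Qed.
Lemma lbr1 {R : realType} (x y : 'rV[R]_6) : lbr x y 0 (inord 1) = x_ x 0 * x_ y 4 - x_ x 4 * x_ y 0.
Proof. lbrtac. Qed.
Lemma lbr2 {R : realType} (x y : 'rV[R]_6) : lbr x y 0 (inord 2) = x_ x 5 * x_ y 3 - x_ x 3 * x_ y 5.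
Proof. lbrtac. Qed.
Lemma lbr3 {R : realType} (x y : 'rV[R]_6) : lbr x y 0 (inord 3) = x_ x 2 * x_ y 5 - x_ x 5 * x_ y 2.
Proof. lbrtac. Qed.
Lemma lbr4 {R : realType} (x y : 'rV[R]_6) : lbr x y 0 (inord 4) = 0.
Proof. lbrtac. Qed.
Lemma lbr5 {R : realType} (x y : 'rV[R]_6) : lbr x y 0 (inord 5) = 0.
Proof. lbrtac. Qed.

Lemma mulE {R : realType} (v : 'rV[R]_6) (D : 'M[R]_6) c : (v *m D) 0 c = \sum_k v 0 k * D k c.
Proof. by rewrite mxE. Qed.
Lemma addE {R : realType} (u v : 'rV[R]_6) c : (u + v) 0 c = u 0 c + v 0 c.
Proof. by rewrite mxE. Qed.

Ltac deq HD a b c H := have H := congr1 (fun v : 'rV[R]_6 => v 0 (@inord 5 c)) (HD (ebas R (inord a)) (ebas R (inord b)));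
  rewrite /= mulE addE sum6 ?lbr0 ?lbr1 ?lbr2 ?lbr3 ?lbr4 ?lbr5 ?ebasD !mxE !eqxx ?inord_eq //= in H.

Lemma der_facts {R : realType} (D : 'M[R]_6) : is_derivation D ->
  D (inord 0) (inord 2) = 0 /\
  D (inord 0) (inord 3) = 0 /\
  D (inord 0) (inord 4) = 0 /\
  D (inord 0) (inord 5) = 0 /\
  D (inord 1) (inord 2) = 0 /\
  D (inord 1) (inord 3) = 0 /\
  D (inord 1) (inord 4) = 0 /\
  D (inord 1) (inord 5) = 0 /\
  D (inord 2) (inord 0) = 0 /\
  D (inord 2) (inord 1) = 0 /\
  D (inord 2) (inord 4) = 0 /\
  D (inord 2) (inord 5) = 0 /\
  D (inord 3) (inord 0) = 0 /\
  D (inord 3) (inord 1) = 0 /\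
  D (inord 3) (inord 4) = 0 /\
  D (inord 3) (inord 5) = 0 /\
  D (inord 4) (inord 2) = 0 /\
  D (inord 4) (inord 3) = 0 /\
  D (inord 4) (inord 5) = 0 /\
  D (inord 5) (inord 0) = 0 /\
  D (inord 5) (inord 1) = 0 /\
  D (inord 5) (inord 4) = 0 /\
  D (inord 0) (inord 1) = - D (inord 1) (inord 0) /\
  D (inord 1) (inord 1) = D (inord 0) (inord 0) /\
  D (inord 4) (inord 4) = 0 /\
  D (inord 2) (inord 3) = - D (inord 3) (inord 2) /\
  D (inord 3) (inord 3) = D (inord 2) (inord 2) /\
  D (inord 5) (inord 5) = 0.
Proof.
move=> HD.
have f0 : D (inord 0) (inord 2) = 0.
{ by deq HD 1%N 4%N 2%N H; lra. }
have f1 : D (inord 0) (inord 3) = 0.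
{ by deq HD 1%N 4%N 3%N H; lra. }
have f2 : D (inord 0) (inord 4) = 0.
{ by deq HD 1%N 4%N 4%N H; lra. }
have f3 : D (inord 0) (inord 5) = 0.
{ by deq HD 1%N 4%N 5%N H; lra. }
have f4 : D (inord 1) (inord 2) = 0.
{ by deq HD 0%N 4%N 2%N H; lra. }
have f5 : D (inord 1) (inord 3) = 0.
{ by deq HD 0%N 4%N 3%N H; lra. }
have f6 : D (inord 1) (inord 4) = 0.
{ by deq HD 0%N 4%N 4%N H; lra. }
have f7 : D (inord 1) (inord 5) = 0.
{ by deq HD 0%N 4%N 5%N H; lra. }
have f8 : D (inord 2) (inord 0) = 0.
{ by deq HD 3%N 5%N 0%N H; lra. }
have f9 : D (inord 2) (inord 1) = 0.
{ by deq HD 3%N 5%N 1%N H; lra. }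
have f10 : D (inord 2) (inord 4) = 0.
{ by deq HD 3%N 5%N 4%N H; lra. }
have f11 : D (inord 2) (inord 5) = 0.
{ by deq HD 3%N 5%N 5%N H; lra. }
have f12 : D (inord 3) (inord 0) = 0.
{ by deq HD 2%N 5%N 0%N H; lra. }
have f13 : D (inord 3) (inord 1) = 0.
{ by deq HD 2%N 5%N 1%N H; lra. }
have f14 : D (inord 3) (inord 4) = 0.
{ by deq HD 2%N 5%N 4%N H; lra. }
have f15 : D (inord 3) (inord 5) = 0.
{ by deq HD 2%N 5%N 5%N H; lra. }
have f16 : D (inord 4) (inord 2) = 0.
{ by deq HD 4%N 5%N 3%N H; lra. }
have f17 : D (inord 4) (inord 3) = 0.
{ by deq HD 4%N 5%N 2%N H; lra. }
have f18 : D (inord 4) (inord 5) = 0.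
{ by deq HD 2%N 4%N 3%N H; lra. }
have f19 : D (inord 5) (inord 0) = 0.
{ by deq HD 4%N 5%N 1%N H; lra. }
have f20 : D (inord 5) (inord 1) = 0.
{ by deq HD 4%N 5%N 0%N H; lra. }
have f21 : D (inord 5) (inord 4) = 0.
{ by deq HD 0%N 5%N 1%N H; lra. }
have f22 : D (inord 0) (inord 1) = - D (inord 1) (inord 0).
{ deq HD 1%N 4%N 1%N H0. lra. }
have f23 : D (inord 1) (inord 1) = D (inord 0) (inord 0).
{ deq HD 0%N 4%N 1%N H0. deq HD 1%N 4%N 0%N H1. lra. }
have f24 : D (inord 4) (inord 4) = 0.
{ deq HD 0%N 4%N 1%N H0. deq HD 1%N 4%N 0%N H1. lra. }
have f25 : D (inord 2) (inord 3) = - D (inord 3) (inord 2).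
{ deq HD 3%N 5%N 3%N H0. lra. }
have f26 : D (inord 3) (inord 3) = D (inord 2) (inord 2).
{ deq HD 2%N 5%N 3%N H0. deq HD 3%N 5%N 2%N H1. lra. }
have f27 : D (inord 5) (inord 5) = 0.
{ deq HD 2%N 5%N 3%N H0. deq HD 3%N 5%N 2%N H1. lra. }
by repeat split; assumption.
Qed.

Theorem lemma4p8 (R : realType) :
  (forall D : 'M[R]_6, is_derivation D ->
     exists d11 d12 d33 d34 d15 d25 d36 d46 : R,
       ebas R (inord 0) *m D = d11 *: ebas R (inord 0) - d12 *: ebas R (inord 1) /\
           ebas R (inord 1) *m D = d12 *: ebas R (inord 0) + d11 *: ebas R (inord 1) /\
           ebas R (inord 2) *m D = d33 *: ebas R (inord 2) - d34 *: ebas R (inord 3) /\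
           ebas R (inord 3) *m D = d34 *: ebas R (inord 2) + d33 *: ebas R (inord 3) /\
           ebas R (inord 4) *m D = d15 *: ebas R (inord 0) + d25 *: ebas R (inord 1) /\
           ebas R (inord 5) *m D = d36 *: ebas R (inord 2) + d46 *: ebas R (inord 3))
  /\
  (forall eta : R, 0 < eta ->
     forall D : 'M[R]_6, is_derivation D ->
       (exists l : 'cV[R]_6, forall x y : 'rV[R]_6,
          form_act (form_act (omega_eta eta) D) D x y = - dlam l x y) ->
       is_inner D).
Proof.
split.
- move=> D HD.
  have [f0 [f1 [f2 [f3 [f4 [f5 [f6 [f7 [f8 [f9 [f10 [f11 [f12 [f13 [f14 [f15 [f16 [f17 [f18 [f19 [f20 [f21 [f22 [f23 [f24 [f25 [f26 f27]]]]]]]]]]]]]]]]]]]]]]]]]]] := @der_facts R D HD.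
  exists (D (inord 0) (inord 0)), (- D (inord 0) (inord 1)), (D (inord 2) (inord 2)),
    (- D (inord 2) (inord 3)), (D (inord 4) (inord 0)), (D (inord 4) (inord 1)),
    (D (inord 5) (inord 2)), (D (inord 5) (inord 3)).
  do !split; apply: vec6; rewrite ebasD ?mxE ?eqxx ?inord_eq //= ?f0 ?f1 ?f2 ?f3 ?f4 ?f5 ?f6 ?f7 ?f8 ?f9 ?f10 ?f11 ?f12 ?f13 ?f14 ?f15 ?f16 ?f17 ?f18 ?f19 ?f20 ?f21 ?f22 ?f23 ?f24 ?f25 ?f26 ?f27; ring.
- move=> eta heta D HD [l Hl].
  have [f0 [f1 [f2 [f3 [f4 [f5 [f6 [f7 [f8 [f9 [f10 [f11 [f12 [f13 [f14 [f15 [f16 [f17 [f18 [f19 [f20 [f21 [f22 [f23 [f24 [f25 [f26 f27]]]]]]]]]]]]]]]]]]]]]]]]]]] := @der_facts R D HD.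
  have h00 : D (inord 0) (inord 0) = 0.
  { have H := Hl (ebas R (inord 0)) (ebas R (inord 1)).
    rewrite /form_act /omega_eta /ewedge /dlam /lfun in H.
    rewrite -!mulmxA !ebasD !mxE in H.
    rewrite !sum6 ?lbr0 ?lbr1 ?lbr2 ?lbr3 ?lbr4 ?lbr5 ?mxE ?eqxx ?inord_eq //= in H.
    rewrite ?f0 ?f1 ?f2 ?f3 ?f4 ?f5 ?f6 ?f7 ?f8 ?f9 ?f10 ?f11 ?f12 ?f13 ?f14 ?f15 ?f16 ?f17 ?f18 ?f19 ?f20 ?f21 ?f22 ?f23 ?f24 ?f25 ?f26 ?f27 in H.
    have : D (inord 0) (inord 0) * D (inord 0) (inord 0) = 0 by lra.
    by move/eqP; rewrite mulf_eq0 orbb => /eqP. }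
  have h22 : D (inord 2) (inord 2) = 0.
  { have H := Hl (ebas R (inord 2)) (ebas R (inord 3)).
    rewrite /form_act /omega_eta /ewedge /dlam /lfun in H.
    rewrite -!mulmxA !ebasD !mxE in H.
    rewrite !sum6 ?lbr0 ?lbr1 ?lbr2 ?lbr3 ?lbr4 ?lbr5 ?mxE ?eqxx ?inord_eq //= in H.
    rewrite ?f0 ?f1 ?f2 ?f3 ?f4 ?f5 ?f6 ?f7 ?f8 ?f9 ?f10 ?f11 ?f12 ?f13 ?f14 ?f15 ?f16 ?f17 ?f18 ?f19 ?f20 ?f21 ?f22 ?f23 ?f24 ?f25 ?f26 ?f27 in H.
    have : D (inord 2) (inord 2) * D (inord 2) (inord 2) = 0 by lra.
    by move/eqP; rewrite mulf_eq0 orbb => /eqP. }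
  exists (D (inord 4) (inord 1) *: ebas R (inord 0) - D (inord 4) (inord 0) *: ebas R (inord 1)
    + D (inord 5) (inord 3) *: ebas R (inord 2) - D (inord 5) (inord 2) *: ebas R (inord 3)
    + D (inord 1) (inord 0) *: ebas R (inord 4) + D (inord 3) (inord 2) *: ebas R (inord 5)).
  move=> y; apply: vec6;
  rewrite mulE sum6 ?lbr0 ?lbr1 ?lbr2 ?lbr3 ?lbr4 ?lbr5 ?mxE ?eqxx ?inord_eq //=;
  rewrite ?f0 ?f1 ?f2 ?f3 ?f4 ?f5 ?f6 ?f7 ?f8 ?f9 ?f10 ?f11 ?f12 ?f13 ?f14 ?f15 ?f16 ?f17 ?f18 ?f19 ?f20 ?f21 ?f22 ?f23 ?f24 ?f25 ?f26 ?f27 ?h00 ?h22;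
  ring.
Qed.
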